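(* Let $K$ be a field, $\vartheta$ any one of the four types (left, right, pre-two-sided, two-sided), and $\mathcal A$ a $K$-algebra. Then $\mathcal A$ is $\vartheta$-quasi-stable if and only if either $\mathcal A\simeq K\times K$ (product algebra with componentwise operations) or $\mathcal A$ is a local $K$-algebra which is algebraic over $K$.
   Context: Algebras are associative, unital and nonzero. A local algebra is one with a unique maximal left ideal. $\mathcal A$ is algebraic over $K$ if every element is a root of a nonzero polynomial over $K$. A $K$-subspace $V$ of $\mathcal A$ is a left (resp. right) Mathieu subspace if whenever $a^m\in V$ for all $m\ge1$, then for every $b\in\mathcal A$, $ba^m\in V$ (resp. $a^mb\in V$) for all sufficiently large $m$; pre-two-sided if both left and right; two-sided if whenever $a^m\in V$ for all $m\ge1$, for all $b,c\in\mathcal A$, $ba^mc\in V$ for all sufficiently large $m$. $\mathcal A$ is $\vartheta$-quasi-stable if every $K$-subspace $V$ with $1\notin V$ is a $\vartheta$-Mathieu subspace of $\mathcal A$. *)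

(* Defs.v *)
From mathcomp Require Import all_boot all_algebra.
Set Implicit Arguments. Unset Strict Implicit. Unset Printing Implicit Defensive.
Import GRing.Theory.
Local Open Scope ring_scope.

Inductive mathieu_kind : Type := MLeft | MRight | MPreTwoSided | MTwoSided.

Section Defs.
Variables (K : fieldType) (A : algType K).

Definition is_subspace (V : A -> Prop) : Prop :=
  V 0 /\ (forall u v, V u -> V v -> V (u + v)) /\
  (forall (k : K) u, V u -> V (k *: u)).

Definition all_pows_in (V : A -> Prop) (a : A) : Prop :=
  forall m : nat, (1 <= m)%N -> V (a ^+ m).

Definition left_mathieu (V : A -> Prop) : Prop :=
  forall a, all_pows_in V a ->
  forall b, exists N : nat, forall m : nat, (N <= m)%N -> V (b * a ^+ m).

Definition right_mathieu (V : A -> Prop) : Prop :=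
  forall a, all_pows_in V a ->
  forall b, exists N : nat, forall m : nat, (N <= m)%N -> V (a ^+ m * b).

Definition pre_two_sided_mathieu (V : A -> Prop) : Prop :=
  left_mathieu V /\ right_mathieu V.

Definition two_sided_mathieu (V : A -> Prop) : Prop :=
  forall a, all_pows_in V a ->
  forall b c, exists N : nat, forall m : nat, (N <= m)%N -> V (b * a ^+ m * c).

Definition mathieu (th : mathieu_kind) (V : A -> Prop) : Prop :=
  match th with
  | MLeft => left_mathieu V
  | MRight => right_mathieu V
  | MPreTwoSided => pre_two_sided_mathieu V
  | MTwoSided => two_sided_mathieu V
  end.

Definition quasi_stable (th : mathieu_kind) : Prop :=
  forall V : A -> Prop, is_subspace V -> ~ V 1 -> mathieu th V.

Definition is_left_ideal (I : A -> Prop) : Prop :=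
  I 0 /\ (forall x y, I x -> I y -> I (x + y)) /\ (forall b x, I x -> I (b * x)).

Definition is_maximal_left_ideal (I : A -> Prop) : Prop :=
  is_left_ideal I /\ ~ I 1 /\
  (forall J : A -> Prop, is_left_ideal J -> ~ J 1 ->
     (forall x, I x -> J x) -> forall x, J x -> I x).

Definition is_local_algebra : Prop :=
  exists I : A -> Prop, is_maximal_left_ideal I /\
    forall J : A -> Prop, is_maximal_left_ideal J -> forall x, J x <-> I x.

Definition is_algebraic : Prop :=
  forall a : A, exists p : {poly K}, p != 0 /\ horner_alg a p = 0.

Definition iso_KxK : Prop :=
  exists f : {lrmorphism A -> (K^o * K^o)%type}, bijective f.

End Defs.

(* Main.v *)
From HB Require Import structures.
Require Import Defs.
From mathcomp Require Import all_boot all_algebra.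
From mathcomp Require Import ring.
From mathcomp Require Import boolp classical_sets.
From Stdlib Require Import ClassicalEpsilon.
Set Implicit Arguments. Unset Strict Implicit. Unset Printing Implicit Defensive.
Import GRing.Theory.
Local Open Scope ring_scope.

Section KK.
Context (K : fieldType) (A : algType K) (e : A) (He : e * e = e) (e0 : e != 0)
  (e1 : e != 1)
  (span : forall x : A, exists l : K * K, x = l.1 *: e + l.2 *: (1 - e)).

Definition kkF (x : A) : K^o * K^o :=
  proj1_sig (constructive_indefinite_description _ (span x)).

Lemma kkF_spec x : x = (kkF x).1 *: e + (kkF x).2 *: (1 - e).
Proof. rewrite /kkF; case: constructive_indefinite_description => l /= //. Qed.

Lemma f0 : (1 - e) * e = 0. Proof. by rewrite mulrBl mul1r He subrr. Qed.
Lemma f1 : e * (1 - e) = 0. Proof. by rewrite mulrBr mulr1 He subrr. Qed.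
Lemma ff : (1 - e) * (1 - e) = 1 - e. Proof. by rewrite mulrBr mulr1 f0 subr0. Qed.
Lemma fne0 : 1 - e != 0. Proof. by rewrite subr_eq0 eq_sym. Qed.

Lemma comb_e (a b : K) : (a *: e + b *: (1 - e)) * e = a *: e.
Proof. by rewrite mulrDl -!scalerAl He f0 scaler0 addr0. Qed.
Lemma comb_f (a b : K) : (a *: e + b *: (1 - e)) * (1 - e) = b *: (1 - e).
Proof. by rewrite mulrDl -!scalerAl ff f1 scaler0 add0r. Qed.

Lemma scal_inj (v : A) (a b : K) : v != 0 -> a *: v = b *: v -> a = b.
Proof.
move=> v0 /eqP; rewrite -subr_eq0 -scalerBl scaler_eq0 (negbTE v0) orbF subr_eq0.
by move/eqP.
Qed.

Lemma kkF1 x l : x * e = l *: e -> (kkF x).1 = l.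
Proof.
move=> H; apply: (@scal_inj e) => //; rewrite -H {2}(kkF_spec x) comb_e //.
Qed.
Lemma kkF2 x l : x * (1 - e) = l *: (1 - e) -> (kkF x).2 = l.
Proof.
move=> H; apply: (@scal_inj (1 - e)); first exact: fne0.
by rewrite -H {2}(kkF_spec x) comb_f.
Qed.

Lemma kkF_e x : x * e = (kkF x).1 *: e.
Proof. by rewrite {1}(kkF_spec x) comb_e. Qed.
Lemma kkF_f x : x * (1 - e) = (kkF x).2 *: (1 - e).
Proof. by rewrite {1}(kkF_spec x) comb_f. Qed.

Lemma kkF_linear : linear kkF.
Proof.
move=> a x y; apply: injective_projections => /=.
  by apply: kkF1; rewrite mulrDl -scalerAl !kkF_e scalerA scalerDl.
by apply: kkF2; rewrite mulrDl -scalerAl !kkF_f scalerA scalerDl.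
Qed.

Lemma kkF_mult : monoid_morphism kkF.
Proof.
split.
  apply: injective_projections => /=.
    by apply: kkF1; rewrite mul1r scale1r.
  by apply: kkF2; rewrite mul1r scale1r.
move=> x y; apply: injective_projections => /=.
  by apply: kkF1; rewrite -mulrA kkF_e -scalerAr kkF_e scalerA mulrC.
by apply: kkF2; rewrite -mulrA kkF_f -scalerAr kkF_f scalerA mulrC.
Qed.

HB.instance Definition _ := GRing.isLinear.Build K A (K^o * K^o)%type *:%R kkF kkF_linear.
HB.instance Definition _ := GRing.isMonoidMorphism.Build A (K^o * K^o)%type kkF kkF_mult.

Lemma kk_iso : iso_KxK A.
Proof.
exists kkF.
exists (fun u : K^o * K^o => u.1 *: e + u.2 *: (1 - e)).
  by move=> x /=; rewrite -kkF_spec.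
move=> u /=; apply: injective_projections.
  by apply: kkF1; rewrite comb_e.
by apply: kkF2; rewrite comb_f.
Qed.
End KK.


Section Gen.
Context (K : fieldType) (A : algType K).
Implicit Types (a b x : A) (V : A -> Prop).

Lemma horner_comm a (p q : {poly K}) :
  horner_alg a p * horner_alg a q = horner_alg a q * horner_alg a p.
Proof. by rewrite -!rmorphM mulrC. Qed.

Lemma hornerAZ a (c : K) (p : {poly K}) : horner_alg a (c *: p) = c *: horner_alg a p.
Proof. by rewrite linearZ /= mulr_algl. Qed.

Lemma Vpoly V a : is_subspace V -> all_pows_in V a ->
  forall r : {poly K}, r`_0 = 0 -> V (horner_alg a r).
Proof.
move=> [V0 [VD VZ]] Va r r0.
rewrite -[r]coefK poly_def rmorph_sum /=.
apply: (big_ind V) => // i _.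
rewrite hornerAZ rmorphXn /= horner_algX.
case: i => [[|i] Hi] /=; first by rewrite r0 scale0r.
by apply: VZ; apply: Va.
Qed.

Lemma decomp (p : {poly K}) a : p != 0 -> horner_alg a p = 0 ->
  exists k : nat, exists h : {poly K}, (0 < k)%N /\
    let e := horner_alg a ('X^k * h) in e * e = e /\ a ^+ k * (1 - e) = 0.
Proof.
move=> p0 pa.
have [m [q q0 pq]] := multiplicity_XsubC p 0.
rewrite p0 /= in q0.
set c := q.[0].
have c0 : c != 0 by exact: q0.
set s := 1 - c^-1 *: q.
have s0 : root s 0.
  by rewrite /root /s hornerD hornerN hornerZ hornerC mulVf // subrr.
have [r sr] := factor_theorem _ _ s0.
rewrite subr0 in sr.
exists m.+1, (r ^+ m.+1); split => //.
have gX : s ^+ m.+1 = 'X^(m.+1) * r ^+ m.+1 by rewrite sr exprMn mulrC.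
set W := \sum_(i < m.+1) 1 ^+ ((m.+1).-1 - i)%N * s ^+ i.
have key : 'X^(m.+1) * (1 - s ^+ m.+1) = p * ('X * (c^-1 *: W)).
  rewrite -{1}(expr1n _ m.+1) subrXX /s opprB addrC subrK.
  rewrite pq ?polyC0 subr0 exprSr -/s -/W -!mul_polyC.
  ring.
have ak : a ^+ m.+1 * (1 - horner_alg a ('X^(m.+1) * r ^+ m.+1)) = 0.
  have := congr1 (horner_alg a) key.
  rewrite [in RHS]rmorphM /= pa mul0r => H.
  rewrite -H gX [in RHS]rmorphM /= [in RHS]rmorphB /= rmorph1 [horner_alg a (GRing.exp _ _)]rmorphXn /= horner_algX //.
rewrite /=; split => //.
set E := horner_alg a _ in ak *.
have EE : E = horner_alg a (r ^+ m.+1) * a ^+ m.+1.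
  rewrite /E rmorphM /= horner_comm.
  by rewrite [horner_alg a (GRing.exp 'X _)]rmorphXn /= horner_algX.
have : E * (1 - E) = 0 by rewrite {1}EE -mulrA ak mulr0.
by move/eqP; rewrite mulrBr mulr1 subr_eq0 => /eqP.
Qed.
End Gen.


Section Zo.
Context (K : fieldType) (A : algType K).

Lemma left_ideal_ext (I J : A -> Prop) : (forall y, I y <-> J y) ->
  is_left_ideal I -> is_left_ideal J.
Proof.
move=> IJ [I0 [ID IM]]; split; first by apply/IJ.
split=> [u v /IJ Iu /IJ Iv|b u /IJ Iu]; apply/IJ; [exact: ID|exact: IM].
Qed.

Lemma exists_max (x : A) : ~ (exists w, w * x = 1) ->
  exists J, is_maximal_left_ideal J /\ J x.
Proof.
move=> nx.
pose I0 := fun y : A => exists b, y = b * x.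
pose P := fun B : set A => is_left_ideal (fun y => B y \/ I0 y) /\ ~ (B 1 \/ I0 1).
have I0n1 : ~ I0 1 by case=> b /esym b1; apply: nx; exists b.
have [|B [PB Bmax]] := @Zorn_bigcup A P.
  move=> F FP Ftot; rewrite /P; split.
    split; first by right; exists 0; rewrite mul0r.
    split.
      move=> u v [[Fu Fu_i Fuu]|[bu ->]] [[Fv Fv_i Fvv]|[bv ->]].
      - have [sub|sub] := Ftot _ _ Fu_i Fv_i.
        + have [_ [+ _]] := (FP _ Fv_i).1.
          move=> /(_ u v (or_introl (sub _ Fuu)) (or_introl Fvv)) [h|h].
            by left; exists Fv.
          by right.
        + have [_ [+ _]] := (FP _ Fu_i).1.
          move=> /(_ u v (or_introl Fuu) (or_introl (sub _ Fvv))) [h|h].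
            by left; exists Fu.
          by right.
      - have [_ [+ _]] := (FP _ Fu_i).1.
        move=> /(_ u (bv * x) (or_introl Fuu) (or_intror (ex_intro _ bv erefl))) [h|h].
          by left; exists Fu.
        by right.
      - have [_ [+ _]] := (FP _ Fv_i).1.
        move=> /(_ (bu * x) v (or_intror (ex_intro _ bu erefl)) (or_introl Fvv)) [h|h].
          by left; exists Fv.
        by right.
      - by right; exists (bu + bv); rewrite mulrDl.
    move=> b u [[Fu Fu_i Fuu]|[bu ->]].
      have [_ [_ +]] := (FP _ Fu_i).1.
      move=> /(_ b u (or_introl Fuu)) [h|h].
        by left; exists Fu.
      by right.
    by right; exists (b * bu); rewrite mulrA.
  case=> [[Fu Fu_i Fuu]|//].
  by apply: (FP _ Fu_i).2; left.
pose J := fun y => B y \/ I0 y.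
exists J; split; last by right; exists 1; rewrite mul1r.
split; first exact: PB.1.
split; first exact: PB.2.
move=> J' LJ' nJ'1 JJ' y J'y.
apply: contrapT => nJy.
apply: (Bmax J').
  split; first by move=> t Bt; apply: JJ'; left.
  by move=> J'B; apply: nJy; left; apply: J'B.
split.
  apply: (left_ideal_ext _ LJ') => t; split; first by left.
  by case=> // It; apply: JJ'; right.
by case=> //; apply: nJ'1 => //; move=> It; apply: JJ'; right.
Qed.

Lemma local_idem : is_local_algebra A -> forall e : A, e * e = e -> e = 0 \/ e = 1.
Proof.
move=> [M [[LM [nM1 _]] Muniq]] e ee.
have inM : forall x : A, ~ (exists w, w * x = 1) -> M x.
  move=> x nx; have [J [mJ Jx]] := exists_max nx.
  by apply/(Muniq _ mJ).
have [[w we]|nw] := pselect (exists w, w * e = 1).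
  by right; rewrite -we -{2}ee mulrA we mul1r.
have [[w we]|nw'] := pselect (exists w, w * (1 - e) = 1).
  left.
  have ff : (1 - e) * (1 - e) = 1 - e by rewrite mulrBr mulr1 mulrBl mul1r ee subrr subr0.
  have h : 1 - e = 1 by rewrite -we -{2}ff mulrA we mul1r.
  by rewrite -(subKr 1 e) h subrr.
exfalso; apply: nM1.
have := LM.2.1 _ _ (inM _ nw) (inM _ nw').
by rewrite addrC subrK.
Qed.
End Zo.


Section T.
Context (K : fieldType) (A : algType K).

Lemma kk_two_sided : iso_KxK A -> forall V : A -> Prop, is_subspace V -> ~ V 1 ->
  two_sided_mathieu V.
Proof.
move=> [f [g fg gf]] V [V0 [VD VZ]] nV1 a Va b c.
have finj : injective f := can_inj fg.
have fX : forall (z : A) m, (f (z ^+ m)).1 = (f z).1 ^+ m /\ (f (z ^+ m)).2 = (f z).2 ^+ m.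
  move=> z m; rewrite rmorphXn; elim: m => [|m [IH1 IH2]]; first by split; rewrite !expr0.
  by rewrite !exprS; split; [rewrite -IH1 | rewrite -IH2].
have [x0|x0] := eqVneq (f a).1 0.
  exists 1%N => m m1.
  have -> : b * a ^+ m * c = ((f b).2 * (f c).2) *: a ^+ m.
    apply: finj; rewrite linearZ !rmorphM /=; apply: injective_projections => /=.
      rewrite (fX a m).1 x0 expr0n.
      by rewrite (_ : (m == 0%N) = false) ?mulr0n ?mulr0 ?mul0r ?scaler0 //; case: m m1.
    by rewrite mulrAC.
  by apply: (VZ); apply: (Va).
have [y0|y0] := eqVneq (f a).2 0.
  exists 1%N => m m1.
  have -> : b * a ^+ m * c = ((f b).1 * (f c).1) *: a ^+ m.
    apply: finj; rewrite linearZ !rmorphM /=; apply: injective_projections => /=.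
      by rewrite mulrAC.
    rewrite (fX a m).2 y0 expr0n.
    by rewrite (_ : (m == 0%N) = false) ?mulr0n ?mulr0 ?mul0r ?scaler0 //; case: m m1.
  by apply: (VZ); apply: (Va).
exfalso; apply: nV1.
set x := (f a).1 in x0; set y := (f a).2 in y0.
have E : (x * y) *: 1 = (x + y) *: a - a * a.
  apply: finj; rewrite linearZ rmorph1 linearB linearZ rmorphM /=.
  apply: injective_projections => /=; rewrite -/x -/y ?mulr1.
    by rewrite -[LHS]/((x*y)*1) -[(x+y) *: x]/((x+y)*x) mulr1 mulrDl addrAC subrr add0r mulrC.
  by rewrite -[LHS]/((x*y)*1) -[(x+y) *: y]/((x+y)*y) mulr1 mulrDl addrK.
have -> : (1 : A) = (x * y)^-1 *: ((x + y) *: a - a * a).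
  by rewrite -E scalerA mulVf ?scale1r // mulf_neq0.
apply: (VZ); apply: (VD); first by apply: (VZ); rewrite -[a]expr1; apply: (Va).
by rewrite -scaleN1r; apply: (VZ); rewrite -expr2; apply: (Va).
Qed.
End T.



Section M.
Context (K : fieldType) (A : algType K).
Implicit Types (a b x y w : A).

Definition alg1 a := exists p : {poly K}, p != 0 /\ horner_alg a p = 0.
Definition triv_idem := forall e : A, e * e = e -> e = 0 \/ e = 1.

Lemma nilp_nolinv x w n : x ^+ n = 0 -> w * x = 1 -> False.
Proof.
move=> xn wx.
have H : forall k, w ^+ k * x ^+ k = 1.
  elim=> [|k IH]; first by rewrite !expr0 mulr1.
  by rewrite exprSr exprS -mulrA [w * (x * _)]mulrA wx mul1r.
by move: (H n); rewrite xn mulr0 => /esym/eqP; rewrite oner_eq0.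
Qed.

Lemma nilp_linv x n : x ^+ n = 0 -> exists u, u * (1 - x) = 1.
Proof.
move=> xn; exists (\sum_(i < n) x ^+ i).
have H : forall k, (\sum_(i < k) x ^+ i) * (1 - x) = 1 - x ^+ k.
  elim=> [|k IH]; first by rewrite big_ord0 mul0r expr0 subrr.
  by rewrite big_ord_recr /= mulrDl IH mulrBr mulr1 -exprSr addrA subrK.
by rewrite H xn subr0.
Qed.

Lemma dich a : alg1 a -> triv_idem ->
  (exists n, a ^+ n = 0) \/ (exists w, w * a = 1 /\ a * w = 1).
Proof.
move=> [p [p0 pa]] ti.
have [k [h [k0 /= [EE Ek]]]] := decomp p0 pa.
destruct k as [|m]; first by [].
have Edef : horner_alg a ('X^(m.+1) * h) = a ^+ m.+1 * horner_alg a h.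
  by rewrite rmorphM /= rmorphXn /= horner_algX.
have comm : a * horner_alg a h = horner_alg a h * a.
  by have := horner_comm a 'X h; rewrite horner_algX.
have [E0|E1] := ti _ EE.
  by left; exists m.+1; move: Ek; rewrite E0 subr0 mulr1.
right; exists (a ^+ m * horner_alg a h); split.
  by rewrite -mulrA -comm mulrA -exprSr -Edef.
by rewrite mulrA -exprS -Edef.
Qed.

Lemma powsV_nilp V a : is_subspace V -> ~ V 1 -> all_pows_in V a -> alg1 a ->
  triv_idem -> exists n, a ^+ n = 0.
Proof.
move=> sV nV1 Va [p [p0 pa]] ti.
have [k [h [k0 /= [EE Ek]]]] := decomp p0 pa.
have [E0|E1] := ti _ EE.
  by exists k; move: Ek; rewrite E0 subr0 mulr1.
exfalso; apply: nV1; rewrite -E1; apply: Vpoly => //.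
by rewrite coefXnM k0.
Qed.

Lemma local_of_dich :
  (forall a, (exists n, a ^+ n = 0) \/ (exists w, w * a = 1 /\ a * w = 1)) ->
  is_local_algebra A.
Proof.
move=> D.
pose N := fun y : A => exists n, y ^+ n = 0.
have F1 : forall y b, N y -> N (b * y).
  move=> y b [n yn]; have [//|[w [wy _]]] := D (b * y).
  by exfalso; apply: (nilp_nolinv yn (w := w * b)); rewrite -mulrA.
have LN : is_left_ideal N.
  split; first by exists 1%N; rewrite expr1.
  split; last by move=> b u Nu; apply: F1.
  move=> u v Nu [n vn]; have [//|[w [wuv _]]] := D (u + v).
  exfalso.
  have [k wuk] := F1 _ w Nu.
  have [z zu] := nilp_linv wuk.
  apply: (nilp_nolinv vn (w := z * w)).
  by rewrite -mulrA -zu; congr (_ * _); rewrite -wuv mulrDr addrC addKr.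
have inN : forall J : A -> Prop, is_left_ideal J -> ~ J 1 -> forall y, J y -> N y.
  move=> J [_ [_ JM]] nJ1 y Jy; have [//|[w [wy _]]] := D y.
  by exfalso; apply: nJ1; rewrite -wy; apply: JM.
have nN1 : ~ N 1.
  by move=> [n]; rewrite expr1n => /eqP; rewrite oner_eq0.
have mN : is_maximal_left_ideal N.
  split=> //; split=> // J LJ nJ1 _; exact: inN.
exists N; split=> // J [LJ [nJ1 mJ]] y; split; first exact: inN.
by apply: (mJ N) => //; exact: inN.
Qed.


Lemma C1 : (forall V : A -> Prop, is_subspace V -> ~ V 1 -> forall a,
    all_pows_in V (a ^+ 2) -> exists N, forall m, (N <= m)%N -> V (a * (a ^+ 2) ^+ m)) ->
  is_algebraic A.
Proof.
move=> H a; apply: contrapT => nalg.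
have tr : forall p : {poly K}, horner_alg a p = 0 -> p = 0.
  move=> p pa; apply/eqP; apply: contrapT => p0; apply: nalg; exists p; split => //.
  exact/negP.
pose V := fun x : A => exists r : {poly K}, x = horner_alg a r /\ forall i, ((i == 0%N) || odd i) -> r`_i = 0.
have sV : is_subspace V.
  split; first by exists 0; split; [rewrite rmorph0|move=> i _; rewrite coef0].
  split.
    move=> u v [r [-> hr]] [r' [-> hr']]; exists (r + r'); split; first by rewrite rmorphD.
    by move=> i hi; rewrite coefD hr // hr' // addr0.
  move=> k u [r [-> hr]]; exists (k *: r); split; first by rewrite hornerAZ.
  by move=> i hi; rewrite coefZ hr // mulr0.
have nV1 : ~ V 1.
  move=> [r [h1 hr]].
  have : r - 1 = 0 by apply: tr; rewrite rmorphB /= rmorph1 -h1 subrr.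
  move/eqP; rewrite subr_eq0 => /eqP r1.
  by move: (hr 0%N erefl); rewrite r1 coef1 /= => /eqP; rewrite oner_eq0.
have hX : forall n, horner_alg a 'X^n = a ^+ n.
  by move=> n; rewrite rmorphXn /= horner_algX.
have Va : all_pows_in V (a ^+ 2).
  move=> m m1; exists 'X^(2 * m); split; first by rewrite hX exprM.
  move=> i hi; rewrite coefXn (_ : (i == 2 * m)%N = false) //.
  apply/negP => /eqP ei; move: hi; rewrite ei oddM /= orbF.
  by case: m m1 {ei}.
have [N HN] := H V sV nV1 a Va.
have [r [hr1 hr2]] := HN N (leqnn N).
have : 'X^((2 * N).+1) - r = 0.
  by apply: tr; rewrite rmorphB /= hX -hr1 -exprM exprS subrr.
move/eqP; rewrite subr_eq0 => /eqP rX.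
move: (hr2 (2 * N).+1); rewrite -rX coefXn eqxx /= oddM /= => /(_ isT) /eqP.
by rewrite oner_eq0.
Qed.

Lemma idem_pow (e : A) n : e * e = e -> e ^+ n.+1 = e.
Proof. by move=> ee; elim: n => [|n IH]; rewrite ?expr1 // exprS IH. Qed.

Lemma line_sub (e : A) : e * e = e -> e != 0 -> e != 1 ->
  let V := fun x : A => exists k : K, x = k *: e in
  is_subspace V /\ ~ V 1 /\ all_pows_in V e.
Proof.
move=> ee e0 e1 V; split.
  split; first by exists 0; rewrite scale0r.
  split; first by move=> u v [k ->] [l ->]; exists (k + l); rewrite scalerDl.
  by move=> c u [k ->]; exists (c * k); rewrite scalerA.
split.
  move=> [k k1]; move: e1 => /eqP; apply.
  by rewrite -[e]mulr1 k1 -scalerAr ee -k1.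
by move=> [|m] // _; exists 1; rewrite scale1r idem_pow.
Qed.

Lemma span_of_line :
  (forall e : A, e * e = e -> e != 0 -> e != 1 -> forall x, exists k : K, x * e = k *: e) ->
  forall e : A, e * e = e -> e != 0 -> e != 1 ->
  forall x, exists l : K * K, x = l.1 *: e + l.2 *: (1 - e).
Proof.
move=> H e ee e0 e1 x.
have ff : (1 - e) * (1 - e) = 1 - e by rewrite mulrBr mulr1 mulrBl mul1r ee subrr subr0.
have f0 : 1 - e != 0 by rewrite subr_eq0 eq_sym.
have f1 : 1 - e != 1 by rewrite -subr_eq0 addrAC subrr add0r oppr_eq0.
have [k hk] := H e ee e0 e1 x.
have [l hl] := H _ ff f0 f1 x.
exists (k, l) => /=; rewrite -hk -hl -mulrDr addrC subrK mulr1 //.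
Qed.

Lemma span_of_line_r :
  (forall e : A, e * e = e -> e != 0 -> e != 1 -> forall x, exists k : K, e * x = k *: e) ->
  forall e : A, e * e = e -> e != 0 -> e != 1 ->
  forall x, exists l : K * K, x = l.1 *: e + l.2 *: (1 - e).
Proof.
move=> H e ee e0 e1 x.
have ff : (1 - e) * (1 - e) = 1 - e by rewrite mulrBr mulr1 mulrBl mul1r ee subrr subr0.
have f0 : 1 - e != 0 by rewrite subr_eq0 eq_sym.
have f1 : 1 - e != 1 by rewrite -subr_eq0 addrAC subrr add0r oppr_eq0.
have [k hk] := H e ee e0 e1 x.
have [l hl] := H _ ff f0 f1 x.
exists (k, l) => /=; rewrite -hk -hl -mulrDl addrC subrK mul1r //.
Qed.

End M.

Theorem theorem7p6 (K : fieldType) (th : mathieu_kind) (A : algType K) :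
  quasi_stable A th <-> (iso_KxK A \/ (is_local_algebra A /\ is_algebraic A)).
Proof.
split.
- move=> QS.
  have LR : (forall V : A -> Prop, is_subspace V -> ~ V 1 -> left_mathieu V) \/
            (forall V : A -> Prop, is_subspace V -> ~ V 1 -> right_mathieu V).
    case: th QS => QS.
    + by left.
    + by right.
    + by left => V sV nV1; have [] := QS V sV nV1.
    + left => V sV nV1 a Va b; have [N HN] := QS V sV nV1 a Va b 1.
      by exists N => m hm; have := HN m hm; rewrite mulr1.
  have alg : is_algebraic A.
    apply: C1 => V sV nV1 a Va.
    case: LR => H; first exact: H.
    have [N HN] := H V sV nV1 _ Va a; exists N => m hm.
    by rewrite -exprM -exprS exprSr exprM; apply: HN.
  have span : forall e : A, e * e = e -> e != 0 -> e != 1 ->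
      forall x, exists l : K * K, x = l.1 *: e + l.2 *: (1 - e).
    case: LR => H.
    + apply: span_of_line => e ee e0 e1 x.
      have [sV [nV1 Ve]] := line_sub ee e0 e1.
      have [N HN] := H _ sV nV1 e Ve x.
      have [k hk] := HN N.+1 (leqnSn N).
      by exists k; rewrite -hk (idem_pow N ee).
    + apply: span_of_line_r => e ee e0 e1 x.
      have [sV [nV1 Ve]] := line_sub ee e0 e1.
      have [N HN] := H _ sV nV1 e Ve x.
      have [k hk] := HN N.+1 (leqnSn N).
      by exists k; rewrite -hk (idem_pow N ee).
  have [[e [ee [e0 e1]]]|ne] := pselect (exists e : A, e * e = e /\ e != 0 /\ e != 1).
    by left; apply: (kk_iso ee e0 e1 (span e ee e0 e1)).
  right; split => //.
  have ti : @triv_idem _ A.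
    move=> e ee; case: (eqVneq e 0) => [->|e0]; first by left.
    case: (eqVneq e 1) => [->|e1]; first by right.
    by exfalso; apply: ne; exists e.
  apply: local_of_dich => a; apply: dich => //; exact: alg a.
- move=> H.
  have TS : forall V : A -> Prop, is_subspace V -> ~ V 1 -> two_sided_mathieu V.
    case: H => [iso|[loc alg]]; first exact: kk_two_sided.
    move=> V sV nV1 a Va b c.
    have [n an] := powsV_nilp sV nV1 Va (alg a) (local_idem loc).
    exists n => m hm; rewrite -(subnK hm) exprD an !mulr0 mul0r.
    by case: sV.
  case: th => V sV nV1 /=.
  + move=> a Va b; have [N HN] := TS V sV nV1 a Va b 1.
    by exists N => m hm; have := HN m hm; rewrite mulr1.
  + move=> a Va b; have [N HN] := TS V sV nV1 a Va 1 b.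
    by exists N => m hm; have := HN m hm; rewrite mul1r.
  + split.
      move=> a Va b; have [N HN] := TS V sV nV1 a Va b 1.
      by exists N => m hm; have := HN m hm; rewrite mulr1.
    move=> a Va b; have [N HN] := TS V sV nV1 a Va 1 b.
    by exists N => m hm; have := HN m hm; rewrite mul1r.
  + exact: TS.
Qed.
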